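(* Let $(\mathscr C,A,\psi)$ be an entwining structure with $A$ finite dimensional over $K$ such that there exists a normalized cointegral $\gamma=\{\gamma_{X}:A^*\otimes\mathscr C(X,X)\longrightarrow A\}_{X\in Ob(\mathscr C)}$. Then a morphism $\phi:\mathcal M\longrightarrow\mathcal M'$ in ${_A^{\mathscr C}}Ctr(\psi)$ has a section (resp. a retraction) in ${_A^{\mathscr C}}Ctr(\psi)$ if and only if it has a section (resp. a retraction) in ${^{\mathscr C}}Ctr$.
   Context: $K$ is a field, $(U',U):=Hom_K(U',U)$. $\mathscr C$ is a coalgebra with several objects ($\delta_{XYZ}:\mathscr C(X,Z)\to\mathscr C(Y,Z)\otimes\mathscr C(X,Y)$, counits $\epsilon_X$). $(\mathscr C,A,\psi)$ is an entwining structure: $A$ a $K$-algebra with multiplication $\mu_A$ and unit $u_A$, $\psi_{XY}:\mathscr C(X,Y)\otimes A\to A\otimes\mathscr C(X,Y)$, $f\otimes a\mapsto a_\psi\otimes f^\psi$, with $a_\psi\otimes\delta_{XYZ}(f^\psi)=a_{\psi\psi}\otimes f_{Y1}^\psi\otimes f_{Y2}^\psi$, $(ab)_\psi\otimes f^\psi=a_\psi b_\psi\otimes f^{\psi\psi}$, $\psi(f\otimes1)=1\otimes f$, $a_\psi\epsilon_Z(g^\psi)=\epsilon_Z(g)a$. ${^\mathscr C}Ctr$ is the category of left $\mathscr C$-contramodules ($\pi_{XY}:(\mathscr C(X,Y),\mathcal M(Y))\to\mathcal M(X)$, coassociative and counital) and ${_A^{\mathscr C}}Ctr(\psi)$ the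 category of entwined contramodules (contramodules with left $A$-module structures $\mu_X:\mathcal M(X)\to(A,\mathcal M(X))$ satisfying $\mu_X\circ\pi_{XY}=(A,\pi_{XY})\circ(\psi_{XY},\mathcal M(Y))\circ(\mathscr C(X,Y),\mu_Y)$, morphisms objectwise $A$-linear). $coev_A:K\to A\otimes A^*$, $1\mapsto\sum_i a_i\otimes a_i^*$ for a basis $\{a_i\}$ with dual basis $\{a_i^*\}$. A normalized cointegral is a family of linear maps $\gamma_X:A^*\otimes\mathscr C(X,X)\to A$ with: (1) $(A\otimes\psi_{XY})\circ(\psi_{XY}\otimes\gamma_X)\circ(\mathscr C(X,Y)\otimes coev_A\otimes\mathscr C(X,X))\circ\delta_{XXY}=(A\otimes\gamma_Y\otimes\mathscr C(X,Y))\circ(coev_A\otimes\delta_{XYY})$; (2) $(A\otimes\mu_A)\circ(A\otimes\gamma_X\otimes A)\circ(coev_A\otimes\mathscr C(X,X)\otimes A)=(\mu_A\otimes\gamma_X)\circ(A\otimes coev_A\otimes\mathscr C(X,X))\circ\psi_{XX}$; (3) $\mu_A\circ(A\otimes\gamma_X)\circ(coev_A\otimes\mathscr C(X,X))=u_A\circ\epsilon_X$. *)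

(* Defs.v *)
(* Tensor products are represented in Sweedler style: an element of U (x) V
   is a finite list of pairs (u_i, v_i) standing for sum_i u_i (x) v_i, and
   two such lists are identified when every (multi)linear map out of the
   tensor product (i.e. every bilinear map) takes the same value on them. *)
From HB Require Import structures.
From mathcomp Require Import all_boot all_order all_algebra.
Set Implicit Arguments. Unset Strict Implicit. Unset Printing Implicit Defensive.
Import GRing.Theory.
Local Open Scope ring_scope.

Section Defs.
Variable K : fieldType.

Definition lmap (U V : lmodType K) (f : U -> V) :=
  forall (k : K) (u v : U), f (k *: u + v) = k *: f u + f v.
Definition slin (U : lmodType K) (f : U -> K) :=
  forall (k : K) (u v : U), f (k *: u + v) = k * f u + f v.
Definition bilin (U V W : lmodType K) (b : U -> V -> W) :=
  (forall v, lmap (fun u => b u v)) /\ (forall u, lmap (b u)).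
Definition trilin (U V T W : lmodType K) (b : U -> V -> T -> W) :=
  [/\ (forall v t, lmap (fun u => b u v t)),
      (forall u t, lmap (fun v => b u v t)) &
      (forall u v, lmap (b u v))].

Definition teq2 (U V : lmodType K) (s t : seq (U * V)) :=
  forall (W : lmodType K) (b : U -> V -> W), bilin b ->
    \sum_(p <- s) b p.1 p.2 = \sum_(p <- t) b p.1 p.2.
Definition teq3 (U V T : lmodType K) (s t : seq (U * V * T)) :=
  forall (W : lmodType K) (b : U -> V -> T -> W), trilin b ->
    \sum_(p <- s) b p.1.1 p.1.2 p.2 = \sum_(p <- t) b p.1.1 p.1.2 p.2.

Definition tlin (U V W : lmodType K) (F : U -> seq (V * W)) :=
  forall (Z : lmodType K) (b : V -> W -> Z), bilin b ->
    lmap (fun u => \sum_(p <- F u) b p.1 p.2).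
Definition tbilin (U U' V W : lmodType K) (F : U -> U' -> seq (V * W)) :=
  forall (Z : lmodType K) (b : V -> W -> Z), bilin b ->
    bilin (fun u u' => \sum_(p <- F u u') b p.1 p.2).

Section Coalg.
Variables (O : Type) (C : O -> O -> lmodType K).
Variable delta : forall X Y Z : O, C X Z -> seq (C Y Z * C X Y).
Variable eps : forall X : O, C X X -> K.
Arguments delta : clear implicits.
Arguments eps : clear implicits.

Definition is_coalgebra :=
  [/\ (forall X Y Z, tlin (delta X Y Z)),
      (forall X, slin (eps X)),
      (forall X Y W Z (f : C X Z),
         teq3 [seq (q.1, q.2, p.2) | p <- delta X Y Z f, q <- delta Y W Z p.1]
              [seq (p.1, q.1, q.2) | p <- delta X W Z f, q <- delta X Y W p.2]),
      (forall X Z (f : C X Z), \sum_(p <- delta X Z Z f) eps Z p.1 *: p.2 = f) &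
      (forall X Z (f : C X Z), \sum_(p <- delta X X Z f) eps X p.2 *: p.1 = f)].

Variable A : algType K.
(* psi X Y f a represents psi_XY (f (x) a) = a_psi (x) f^psi *)
Variable psi : forall X Y : O, C X Y -> A -> seq (A * C X Y).
Arguments psi : clear implicits.

Definition is_entwining :=
  [/\ (forall X Y, tbilin (psi X Y)),
      (forall X Y Z (f : C X Z) (a : A),
         teq3 [seq (p.1, q.1, q.2) | p <- psi X Z f a, q <- delta X Y Z p.2]
              (flatten [seq [seq (r.1, r.2, q.2) | q <- psi X Y p.2 a,
                                                   r <- psi Y Z p.1 q.1]
                       | p <- delta X Y Z f])),
      (forall X Y (f : C X Y) (a b : A),
         teq2 (psi X Y f (a * b))
              [seq (p.1 * q.1, q.2) | p <- psi X Y f a, q <- psi X Y p.2 b]),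
      (forall X Y (f : C X Y), teq2 (psi X Y f 1) [:: (1, f)]) &
      (forall Z (g : C Z Z) (a : A),
         \sum_(p <- psi Z Z g a) eps Z p.2 *: p.1 = eps Z g *: a)].

(* b is a basis of A (indexed by 'I_n, so A is finite dimensional) and
   bstar its dual basis *)
Definition basis_dual (n : nat) (b : 'I_n -> A) (bstar : 'I_n -> A -> K) :=
  [/\ (forall i, slin (bstar i)),
      (forall i j, bstar j (b i) = (i == j)%:R) &
      (forall a : A, exists c : 'I_n -> K, a = \sum_i c i *: b i)].

(* coev_A(1) = sum_i a_i (x) a_i^* *)
Definition coev n (b : 'I_n -> A) (bstar : 'I_n -> A -> K) : seq (A * (A -> K)) :=
  [seq (b i, bstar i) | i <- enum 'I_n].

(* normalized cointegral; gamma X l f represents gamma_X (l (x) f) *)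
Definition normalized_cointegral n (b : 'I_n -> A) (bstar : 'I_n -> A -> K)
    (gamma : forall X : O, (A -> K) -> C X X -> A) :=
  let s := coev b bstar in
  [/\ (forall X l, slin l -> lmap (gamma X l)),
      (forall X (f : C X X) (k : K) (l1 l2 : A -> K), slin l1 -> slin l2 ->
         gamma X (fun a => k * l1 a + l2 a) f = k *: gamma X l1 f + gamma X l2 f),
      (forall X Y (f : C X Y),
         teq3 (flatten [seq flatten [seq [seq (p.1, q.1, q.2)
                                         | p <- psi X Y u.1 c.1,
                                           q <- psi X Y p.2 (gamma X c.2 u.2)]
                                    | c <- s]
                       | u <- delta X X Y f])
              [seq (c.1, gamma Y c.2 w.1, w.2) | c <- s, w <- delta X Y Y f]),
      (forall X (f : C X X) (a : A),
         teq2 [seq (c.1, gamma X c.2 f * a) | c <- s]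
              [seq (p.1 * c.1, gamma X c.2 p.2) | p <- psi X X f a, c <- s]) &
      (forall X (f : C X X), \sum_(c <- s) c.1 * gamma X c.2 f = eps X f *: 1)].

(* left C-contramodules: pi X Y g represents pi_XY (g), g in Hom_K(C(X,Y), M(Y));
   pi is only constrained on K-linear arguments g *)
Definition is_contramodule (M : O -> lmodType K)
    (pi : forall X Y : O, (C X Y -> M Y) -> M X) :=
  [/\ (forall X Y (k : K) (g1 g2 : C X Y -> M Y), lmap g1 -> lmap g2 ->
         pi X Y (fun f => k *: g1 f + g2 f) = k *: pi X Y g1 + pi X Y g2),
      (forall X Y Z (g : C X Y -> C Y Z -> M Z), bilin g ->
         pi X Y (fun f => pi Y Z (g f))
         = pi X Z (fun h => \sum_(p <- delta X Y Z h) g p.2 p.1)) &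
      (forall X (m : M X), pi X X (fun f => eps X f *: m) = m)].

Definition is_contra_morphism (M M' : O -> lmodType K)
    (pi : forall X Y : O, (C X Y -> M Y) -> M X)
    (pi' : forall X Y : O, (C X Y -> M' Y) -> M' X)
    (phi : forall X : O, M X -> M' X) :=
  (forall X, lmap (phi X)) /\
  (forall X Y (g : C X Y -> M Y), lmap g ->
     phi X (pi X Y g) = pi' X Y (fun f => phi Y (g f))).

(* entwined contramodules: mu X m a represents a . m *)
Definition is_entwined_contramodule (M : O -> lmodType K)
    (pi : forall X Y : O, (C X Y -> M Y) -> M X) (mu : forall X : O, M X -> A -> M X) :=
  [/\ is_contramodule pi,
      (forall X, bilin (mu X)),
      (forall X (m : M X), mu X m 1 = m),
      (forall X (m : M X) (a b : A), mu X m (a * b) = mu X (mu X m b) a) &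
      (forall X Y (g : C X Y -> M Y) (a : A), lmap g ->
         mu X (pi X Y g) a
         = pi X Y (fun f => \sum_(p <- psi X Y f a) mu Y (g p.2) p.1))].

Definition is_entwined_morphism (M M' : O -> lmodType K)
    (pi : forall X Y : O, (C X Y -> M Y) -> M X)
    (pi' : forall X Y : O, (C X Y -> M' Y) -> M' X)
    (mu : forall X : O, M X -> A -> M X) (mu' : forall X : O, M' X -> A -> M' X)
    (phi : forall X : O, M X -> M' X) :=
  is_contra_morphism pi pi' phi /\
  (forall X (m : M X) (a : A), phi X (mu X m a) = mu' X (phi X m) a).

Definition has_section_contra (M M' : O -> lmodType K) pi pi' (phi : forall X : O, M X -> M' X) :=
  exists s : forall X : O, M' X -> M X,
    @is_contra_morphism M' M pi' pi s /\ forall X (m : M' X), phi X (s X m) = m.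
Definition has_retraction_contra (M M' : O -> lmodType K) pi pi' (phi : forall X : O, M X -> M' X) :=
  exists r : forall X : O, M' X -> M X,
    @is_contra_morphism M' M pi' pi r /\ forall X (m : M X), r X (phi X m) = m.
Definition has_section_entwined (M M' : O -> lmodType K) pi pi' mu mu' (phi : forall X : O, M X -> M' X) :=
  exists s : forall X : O, M' X -> M X,
    @is_entwined_morphism M' M pi' pi mu' mu s /\ forall X (m : M' X), phi X (s X m) = m.
Definition has_retraction_entwined (M M' : O -> lmodType K) pi pi' mu mu' (phi : forall X : O, M X -> M' X) :=
  exists r : forall X : O, M' X -> M X,
    @is_entwined_morphism M' M pi' pi mu' mu r /\ forall X (m : M X), r X (phi X m) = m.

End Coalg.
End Defs.

(* Main.v *)
Require Import Defs.
From HB Require Import structures.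
From mathcomp Require Import all_boot all_order all_algebra.
From Stdlib Require Import FunctionalExtensionality.
Import GRing.Theory.
Set Implicit Arguments.
Local Open Scope ring_scope.

Lemma lmap0 (K : fieldType) (U V : lmodType K) (f : U -> V) : lmap f -> f 0 = 0.
Proof. move=> hf; have := hf 1 0 0; rewrite !scale1r !addr0 => /(congr1 (fun x => x - f 0)); by rewrite subrr addrK. Qed.
Lemma lmapD (K : fieldType) (U V : lmodType K) (f : U -> V) u v : lmap f -> f (u + v) = f u + f v.
Proof. by move=> hf; have := hf 1 u v; rewrite !scale1r. Qed.
Lemma lmapZ (K : fieldType) (U V : lmodType K) (f : U -> V) k u : lmap f -> f (k *: u) = k *: f u.
Proof. by move=> hf; have := hf k u 0; rewrite (lmap0 hf) !addr0. Qed.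
Lemma lmap_sum (K : fieldType) (U V : lmodType K) (f : U -> V) I (s : seq I) (F : I -> U) :
  lmap f -> f (\sum_(i <- s) F i) = \sum_(i <- s) f (F i).
Proof. move=> hf; elim: s => [|x s IH]; rewrite ?big_nil ?lmap0 // !big_cons lmapD //. by rewrite IH. Qed.
Lemma lmap_add (K : fieldType) (U V : lmodType K) (g h : U -> V) :
  lmap g -> lmap h -> lmap (fun x => g x + h x).
Proof. move=> hg hh k u v; rewrite hg hh scalerDr; by rewrite addrACA. Qed.
Lemma lmap_sumf (K : fieldType) (U V : lmodType K) I (s : seq I) (G : I -> U -> V) :
  (forall i, lmap (G i)) -> lmap (fun x => \sum_(i <- s) G i x).
Proof.
move=> hG; elim: s => [|y s IH].
  by move=> k u v; rewrite !big_nil scaler0 addr0.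
move=> k u v; rewrite !big_cons hG IH scalerDr; by rewrite addrACA.
Qed.
Lemma lmap_comp (K : fieldType) (U V W : lmodType K) (f : V -> W) (g : U -> V) :
  lmap f -> lmap g -> lmap (fun x => f (g x)).
Proof. by move=> hf hg k u v; rewrite hg hf. Qed.

Lemma pi_add (K : fieldType) (U V W : lmodType K) (pi : (U -> V) -> W) :
  (forall k (g1 g2 : U -> V), lmap g1 -> lmap g2 ->
     pi (fun f => k *: g1 f + g2 f) = k *: pi g1 + pi g2) ->
  forall g1 g2, lmap g1 -> lmap g2 -> pi (fun f => g1 f + g2 f) = pi g1 + pi g2.
Proof.
move=> hp g1 g2 h1 h2; rewrite -[pi g1]scale1r -hp //.
by congr pi; apply: functional_extensionality => f; rewrite scale1r.
Qed.
Lemma pi_zero (K : fieldType) (U V W : lmodType K) (pi : (U -> V) -> W) :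
  (forall k (g1 g2 : U -> V), lmap g1 -> lmap g2 ->
     pi (fun f => k *: g1 f + g2 f) = k *: pi g1 + pi g2) ->
  pi (fun _ => 0) = 0.
Proof.
move=> hp.
have h0 : lmap (fun _ : U => (0 : V)) by move=> k u v; rewrite scaler0 addr0.
have := hp 1 _ _ h0 h0.
have -> : (fun _ : U => 1 *: (0:V) + 0) = (fun _ => 0).
  by apply: functional_extensionality => f; rewrite scale1r addr0.
rewrite scale1r.
move=> /(congr1 (fun x => x - pi (fun _ => 0))); by rewrite subrr addrK.
Qed.
Lemma pi_sum (K : fieldType) (U V W : lmodType K) (pi : (U -> V) -> W) I (s : seq I) (G : I -> U -> V) :
  (forall k (g1 g2 : U -> V), lmap g1 -> lmap g2 ->
     pi (fun f => k *: g1 f + g2 f) = k *: pi g1 + pi g2) ->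
  (forall i, lmap (G i)) ->
  pi (fun f => \sum_(i <- s) G i f) = \sum_(i <- s) pi (G i).
Proof.
move=> hp hG; elim: s => [|y s IH].
  rewrite big_nil; transitivity (pi (fun _ => 0)); last exact: (@pi_zero _ _ _ _ pi hp).
  congr pi; apply: functional_extensionality => f; by rewrite big_nil.
rewrite big_cons -IH -(@pi_add _ _ _ _ pi hp) //; last exact: lmap_sumf.
by congr pi; apply: functional_extensionality => f; rewrite big_cons.
Qed.

Lemma big_flat3 (R : zmodType) (U T V W Z : Type) (D : seq U) (S : seq T)
  (P : U -> T -> seq (V * W)) (Q : V * W -> U -> T -> seq (V * Z)) (F : V * V * Z -> R) :
  \sum_(x <- flatten [seq flatten [seq [seq (p.1, q.1, q.2) | p <- P u c, q <- Q p u c] | c <- S] | u <- D]) F x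
  = \sum_(u <- D) \sum_(c <- S) \sum_(p <- P u c) \sum_(q <- Q p u c) F (p.1, q.1, q.2).
Proof.
rewrite big_flatten big_map; apply: eq_bigr => u _.
rewrite big_flatten big_map; apply: eq_bigr => c _.
by rewrite big_allpairs_dep.
Qed.

Definition avg (K : fieldType) (O : Type) (C : O -> O -> lmodType K) (A : algType K)
  (n : nat) (b : 'I_n -> A) (bstar : 'I_n -> A -> K)
  (gamma : forall X : O, (A -> K) -> C X X -> A)
  (M M' : O -> lmodType K)
  (pi : forall X Y : O, (C X Y -> M Y) -> M X)
  (mu : forall X : O, M X -> A -> M X) (mu' : forall X : O, M' X -> A -> M' X)
  (t : forall X : O, M' X -> M X) (X : O) (m' : M' X) : M X :=
  pi X X (fun f => \sum_(i <- enum 'I_n) mu X (t X (mu' X m' (gamma X (bstar i) f))) (b i)).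
Arguments avg {K O C A n} b bstar gamma {M M'} pi mu mu' t X m'.

Lemma avg_Alin (K : fieldType) (O : Type) (C : O -> O -> lmodType K)
  (delta : forall X Y Z : O, C X Z -> seq (C Y Z * C X Y))
  (eps : forall X : O, C X X -> K)
  (A : algType K) (psi : forall X Y : O, C X Y -> A -> seq (A * C X Y))
  (n : nat) (b : 'I_n -> A) (bstar : 'I_n -> A -> K)
  (gamma : forall X : O, (A -> K) -> C X X -> A)
  (M M' : O -> lmodType K)
  (pi : forall X Y : O, (C X Y -> M Y) -> M X)
  (pi' : forall X Y : O, (C X Y -> M' Y) -> M' X)
  (mu : forall X : O, M X -> A -> M X) (mu' : forall X : O, M' X -> A -> M' X)
  (t : forall X : O, M' X -> M X) :
  is_entwining delta eps psi ->
  basis_dual b bstar ->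
  normalized_cointegral delta eps psi b bstar gamma ->
  is_entwined_contramodule delta eps psi pi mu ->
  is_entwined_contramodule delta eps psi pi' mu' ->
  is_contra_morphism pi' pi t ->
  is_entwined_morphism pi' pi mu' mu (avg b bstar gamma pi mu mu' t).
Proof.
move=> [psilin _ _ _ _] [bslin _ _] [glin _ g1 g2 g3].
move=> [[pilin piass picounit] mubil mu1 mumul mupi].
move=> [[pilin' piass' picounit'] mubil' mu1' mumul' mupi'].
move=> [tlin tpi].
have muL : forall X a k (u v : M X), mu X (k*:u+v) a = k*: mu X u a + mu X v a.
  by move=> X a; exact: (mubil X).1.
have muR : forall X (m : M X) k (u v : A), mu X m (k*:u+v) = k*: mu X m u + mu X m v.
  by move=> X m; exact: (mubil X).2.
have mu'L : forall X a k (u v : M' X), mu' X (k*:u+v) a = k*: mu' X u a + mu' X v a.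
  by move=> X a; exact: (mubil' X).1.
have mu'R : forall X (m : M' X) k (u v : A), mu' X m (k*:u+v) = k*: mu' X m u + mu' X m v.
  by move=> X m; exact: (mubil' X).2.
have tL : forall X k (u v : M' X), t X (k*:u+v) = k*: t X u + t X v.
  by move=> X; exact: tlin.
have gL : forall X i k (u v : C X X), gamma X (bstar i) (k*:u+v) = k*: gamma X (bstar i) u + gamma X (bstar i) v.
  by move=> X i; apply: glin.
have muSL : forall X a I (s : seq I) (F : I -> M X), mu X (\sum_(i <- s) F i) a = \sum_(i <- s) mu X (F i) a.
  by move=> X a I s F; exact: (lmap_sum (f := fun m => mu X m a) s F ((mubil X).1 a)).
have muSR : forall X m I (s : seq I) (F : I -> A), mu X m (\sum_(i <- s) F i) = \sum_(i <- s) mu X m (F i).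
  by move=> X m I s F; exact: (lmap_sum s F ((mubil X).2 m)).
have mu'SL : forall X a I (s : seq I) (F : I -> M' X), mu' X (\sum_(i <- s) F i) a = \sum_(i <- s) mu' X (F i) a.
  by move=> X a I s F; exact: (lmap_sum (f := fun m => mu' X m a) s F ((mubil' X).1 a)).
have mu'SR : forall X m I (s : seq I) (F : I -> A), mu' X m (\sum_(i <- s) F i) = \sum_(i <- s) mu' X m (F i).
  by move=> X m I s F; exact: (lmap_sum s F ((mubil' X).2 m)).
have tS : forall X I (s : seq I) (F : I -> M' X), t X (\sum_(i <- s) F i) = \sum_(i <- s) t X (F i).
  by move=> X I s F; exact: (lmap_sum s F (tlin X)).
have Glin : forall X (m' : M' X), lmap (fun f => \sum_(i <- enum 'I_n) mu X (t X (mu' X m' (gamma X (bstar i) f))) (b i)).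
  move=> X m' k u v.
  under eq_bigr => i _ do rewrite gL mu'R tL muL.
  by rewrite big_split /= -scaler_sumr.
split; last first.
  move=> X m' a; rewrite /avg mupi //; symmetry.
  congr (pi X X); apply: functional_extensionality => f.
  have bb : bilin (fun x y => mu X (t X (mu' X m' y)) x).
    split; first by move=> y; exact: (mubil X).2.
    by move=> x k u v; rewrite mu'R tL muL.
  have := g2 X f a _ _ bb.
  rewrite big_map /coev big_map big_allpairs_dep /=.
  move=> h.
  rewrite [RHS](eq_bigr (fun i => mu X (t X (mu' X m' (gamma X (bstar i) f * a))) (b i))); last by move=> i _; rewrite mumul'.
  rewrite h.
  apply: eq_bigr => p _; rewrite muSL.
  rewrite big_map; apply: eq_bigr => i _ /=; by rewrite mumul.
split.
  move=> X k u v; rewrite /avg -pilin; try exact: Glin.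
  congr (pi X X); apply: functional_extensionality => f.
  rewrite scaler_sumr -big_split; apply: eq_bigr => i _ /=.
  by rewrite mu'L tL muL.
move=> X Y g hg; rewrite /avg.
have bG' : bilin (fun h f' => \sum_(i <- enum 'I_n) mu Y (t Y (mu' Y (g h) (gamma Y (bstar i) f'))) (b i)).
  split; last by move=> h; exact: Glin.
  move=> f' k u v /=; rewrite scaler_sumr -big_split; apply: eq_bigr => i _ /=.
  by rewrite hg mu'L tL muL.
rewrite (piass X Y Y _ bG').
have trTr : trilin (fun x y h => mu Y (t Y (mu' Y (g h) y)) x).
  split.
  - by move=> y h; exact: (mubil Y).2.
  - by move=> x h k u v /=; rewrite mu'R tL muL.
  - by move=> x y k u v /=; rewrite hg mu'L tL muL.
have bTr : forall x, bilin (fun y h => mu Y (t Y (mu' Y (g h) y)) x).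
  by move=> x; case: trTr => _ h2 h3; split; [exact: h2 | exact: h3].
have bPhi : forall a, bilin (fun x h' => \sum_(q <- psi X Y h' a) mu Y (t Y (mu' Y (g q.2) q.1)) x).
  move=> a; split.
    move=> h'; eapply lmap_sumf => q; by case: trTr => h1 _ _; exact: h1.
  by move=> x; exact: ((psilin X Y _ _ (bTr x)).1 a).
set H := fun (f : C X X) (h : C X Y) => \sum_(i <- enum 'I_n) \sum_(r <- psi X Y h (b i))
   \sum_(q <- psi X Y r.2 (gamma X (bstar i) f)) mu Y (t Y (mu' Y (g q.2) q.1)) r.1.
have bb1 : bilin (fun x h' => mu' Y (g h') x).
  split; first by move=> h'; exact: (mubil' Y).2.
  by move=> x k u v /=; rewrite hg mu'L.
have e1 : (fun f => \sum_(i <- enum 'I_n) mu X (t X (mu' X (pi' X Y g) (gamma X (bstar i) f))) (b i))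
        = (fun f => pi X Y (H f)).
  apply: functional_extensionality => f.
  transitivity (\sum_(i <- enum 'I_n) pi X Y (fun h => \sum_(r <- psi X Y h (b i))
      \sum_(q <- psi X Y r.2 (gamma X (bstar i) f)) mu Y (t Y (mu' Y (g q.2) q.1)) r.1)).
    apply: eq_bigr => i _.
    have l1 := (psilin X Y _ _ bb1).1 (gamma X (bstar i) f).
    rewrite mupi' // tpi; last exact: l1.
    rewrite mupi; last by eapply (lmap_comp (f := t Y)); [exact: tlin | exact: l1].
    congr (pi X Y); apply: functional_extensionality => h; apply: eq_bigr => r _.
    by rewrite tS muSL.
  symmetry; rewrite /H (@pi_sum _ _ _ _ (pi X Y) _ _ _ (pilin X Y)) // => i.
  exact: ((psilin X Y _ _ (bPhi (gamma X (bstar i) f))).1 (b i)).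
have bH : bilin H.
  split.
    move=> h; rewrite /H; eapply lmap_sumf => i; eapply lmap_sumf => r.
    eapply (lmap_comp (f := fun a => \sum_(q <- psi X Y r.2 a) mu Y (t Y (mu' Y (g q.2) q.1)) r.1)
                      (g := gamma X (bstar i))).
      exact: ((psilin X Y _ _ (bTr r.1)).2 r.2).
    exact: glin.
  move=> f; rewrite /H; eapply lmap_sumf => i.
  exact: ((psilin X Y _ _ (bPhi (gamma X (bstar i) f))).1 (b i)).
rewrite e1 (piass X X Y H bH).
congr (pi X Y); apply: functional_extensionality => h.
have := g1 X Y h _ _ trTr.
rewrite /coev /H big_flat3 big_allpairs_dep /= => h1.
transitivity (\sum_(u <- delta X X Y h)
    \sum_(c <- [seq (b i, bstar i) | i <- enum 'I_n])
       \sum_(p <- psi X Y u.1 c.1)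
          \sum_(q <- psi X Y p.2 (gamma X c.2 u.2))
             mu Y (t Y (mu' Y (g q.2) q.1)) p.1).
  by apply: eq_bigr => u _; rewrite [RHS]big_map.
apply: (etrans h1); rewrite [LHS]big_map exchange_big /=.
done.
Qed.

Lemma key_sum (K : fieldType) (O : Type) (C : O -> O -> lmodType K)
  (A : algType K) (n : nat) (b : 'I_n -> A) (bstar : 'I_n -> A -> K)
  (gamma : forall X : O, (A -> K) -> C X X -> A) (eps : forall X : O, C X X -> K)
  (M : O -> lmodType K) (mu : forall X : O, M X -> A -> M X) X (m : M X) f :
  (forall X (f : C X X), \sum_(c <- coev b bstar) c.1 * gamma X c.2 f = eps X f *: 1) ->
  bilin (mu X) -> mu X m 1 = m -> (forall (m : M X) (a b : A), mu X m (a * b) = mu X (mu X m b) a) ->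
  \sum_(i <- enum 'I_n) mu X (mu X m (gamma X (bstar i) f)) (b i) = eps X f *: m.
Proof.
move=> g3 [_ hR] h1 hmul.
have := g3 X f; rewrite /coev big_map /= => e.
transitivity (mu X m (\sum_(i <- enum 'I_n) b i * gamma X (bstar i) f)).
  rewrite (lmap_sum _ _ (hR m)); apply: eq_bigr => i _; by rewrite hmul.
by rewrite e (lmapZ _ _ (hR m)) h1.
Qed.

Lemma avg_Glin (K : fieldType) (O : Type) (C : O -> O -> lmodType K)
  (A : algType K) (n : nat) (b : 'I_n -> A) (bstar : 'I_n -> A -> K)
  (gamma : forall X : O, (A -> K) -> C X X -> A)
  (M M' : O -> lmodType K)
  (mu : forall X : O, M X -> A -> M X) (mu' : forall X : O, M' X -> A -> M' X)
  (t : forall X : O, M' X -> M X) X (m' : M' X) :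
  (forall i, slin (bstar i)) -> (forall X l, slin l -> lmap (gamma X l)) ->
  bilin (mu X) -> bilin (mu' X) -> lmap (t X) ->
  lmap (fun f => \sum_(i <- enum 'I_n) mu X (t X (mu' X m' (gamma X (bstar i) f))) (b i)).
Proof.
move=> bslin glin [muL _] [_ mu'R] tL k u v.
under eq_bigr => i _ do rewrite glin // mu'R tL muL.
by rewrite big_split /= -scaler_sumr.
Qed.

Unset Implicit Arguments.

Theorem proposition7p4 (K : fieldType) (O : Type) (C : O -> O -> lmodType K)
  (delta : forall X Y Z : O, C X Z -> seq (C Y Z * C X Y))
  (eps : forall X : O, C X X -> K)
  (A : algType K) (psi : forall X Y : O, C X Y -> A -> seq (A * C X Y))
  (n : nat) (b : 'I_n -> A) (bstar : 'I_n -> A -> K)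
  (gamma : forall X : O, (A -> K) -> C X X -> A)
  (M M' : O -> lmodType K)
  (pi : forall X Y : O, (C X Y -> M Y) -> M X)
  (pi' : forall X Y : O, (C X Y -> M' Y) -> M' X)
  (mu : forall X : O, M X -> A -> M X) (mu' : forall X : O, M' X -> A -> M' X)
  (phi : forall X : O, M X -> M' X) :
  is_coalgebra delta eps ->
  is_entwining delta eps psi ->
  basis_dual b bstar ->
  normalized_cointegral delta eps psi b bstar gamma ->
  is_entwined_contramodule delta eps psi pi mu ->
  is_entwined_contramodule delta eps psi pi' mu' ->
  is_entwined_morphism pi pi' mu mu' phi ->
  (has_section_entwined pi pi' mu mu' phi <-> has_section_contra pi pi' phi) /\
  (has_retraction_entwined pi pi' mu mu' phi <-> has_retraction_contra pi pi' phi).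
Proof.
move=> _ hent hbd hgam hM hM' hphi.
have hM0 := hM; have hM'0 := hM'.
case: hM0 => [[pilin piass picounit] mubil mu1 mumul mupi].
case: hM'0 => [[pilin' piass' picounit'] mubil' mu1' mumul' mupi'].
case: hphi => [[philin phipi] phimu].
case: (hbd) => bslin _ _.
case: (hgam) => glin _ _ _ g3.
split; split.
- by case=> s [[hs _] hsec]; exists s.
- case=> s [hs hsec]; exists (avg b bstar gamma pi mu mu' s); split.
    exact: (avg_Alin hent hbd hgam hM hM' hs).
  move=> X m'; rewrite /avg phipi; last first.
    eapply avg_Glin; [exact: bslin | exact: glin | exact: (mubil X) | exact: (mubil' X) | exact: (proj1 hs X)].
  transitivity (pi' X X (fun f => eps X f *: m')); last exact: picounit'.
  congr (pi' X X); apply: functional_extensionality => f.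
  rewrite (lmap_sum _ _ (philin X)) -(@key_sum _ _ _ _ _ b bstar gamma eps _ mu' X m' f g3 (mubil' X) (mu1' X m') (mumul' X)).
  apply: eq_bigr => i _; by rewrite phimu hsec.
- by case=> r [[hr _] hret]; exists r.
- case=> r [hr hret]; exists (avg b bstar gamma pi mu mu' r); split.
    exact: (avg_Alin hent hbd hgam hM hM' hr).
  move=> X m; rewrite /avg.
  transitivity (pi X X (fun f => eps X f *: m)); last exact: picounit.
  congr (pi X X); apply: functional_extensionality => f.
  rewrite -(@key_sum _ _ _ _ _ b bstar gamma eps _ mu X m f g3 (mubil X) (mu1 X m) (mumul X)).
  apply: eq_bigr => i _; by rewrite -phimu hret.
Qed.
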